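(* Let $\Phi:\ell^\infty(\mathbb Z)\to\ell^\infty(\mathbb Z)$ be a contractive, idempotent linear map commuting with the backward shift $B$. If $\lambda_1,\lambda_2,\lambda_3\in\sigma(\Phi)$, then $\lambda_1\overline{\lambda_2}\lambda_3\in\sigma(\Phi)$. For any $\lambda\in\sigma(\Phi)$, the set $\overline{\lambda}\cdot\sigma(\Phi)=\{\overline\lambda\mu:\mu\in\sigma(\Phi)\}$ is a subgroup of $\mathbb T$. If in addition $\Phi$ is unital, then $\sigma(\Phi)$ is a subgroup of $\mathbb T$.
   Context: $(Bv)_n=v_{n+1}$. For $\lambda\in\mathbb T$ let $x_\lambda=(\lambda^n)_{n\in\mathbb Z}$; a linear map $\Phi$ commuting with $B$ satisfies $\Phi(x_\lambda)=c_\lambda x_\lambda$ for some scalar $c_\lambda$, and $\sigma(\Phi)=\{\lambda\in\mathbb T:c_\lambda\neq0\}$. *)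

(* Defs.v *)
From HB Require Import structures.
From mathcomp Require Import all_boot all_order all_algebra.
From mathcomp Require Import complex reals.
Set Implicit Arguments. Unset Strict Implicit. Unset Printing Implicit Defensive.
Import Order.TTheory GRing.Theory Num.Theory.
Local Open Scope ring_scope.
Local Open Scope complex_scope.

Section Defs.
Variable R : realType.
Notation C := R[i].

Definition seqZ := int -> C.
Definition bounded (v : seqZ) : Prop := exists M : C, forall n, `|v n| <= M.

Definition bshift (v : seqZ) : seqZ := fun n => v (n + 1)%R.

(* A map Phi on l^oo(Z) is represented by Phi : seqZ -> seqZ; only its values
   on bounded sequences matter, all hypotheses are restricted to l^oo(Z). *)
Definition maps_linf (Phi : seqZ -> seqZ) : Prop :=
  forall v, bounded v -> bounded (Phi v).
Definition linear_linf (Phi : seqZ -> seqZ) : Prop :=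
  forall (a : C) (u v : seqZ), bounded u -> bounded v ->
    Phi (fun n => a * u n + v n) = (fun n => a * Phi u n + Phi v n).
Definition contractive_linf (Phi : seqZ -> seqZ) : Prop :=
  forall (v : seqZ) (M : C), bounded v -> (forall n, `|v n| <= M) ->
    forall n, `|Phi v n| <= M.
Definition idempotent_linf (Phi : seqZ -> seqZ) : Prop :=
  forall v, bounded v -> Phi (Phi v) = Phi v.
Definition commutes_shift (Phi : seqZ -> seqZ) : Prop :=
  forall v, bounded v -> Phi (bshift v) = bshift (Phi v).
Definition unital (Phi : seqZ -> seqZ) : Prop :=
  Phi (fun _ => 1) = (fun _ => 1).

Definition xseq (l : C) : seqZ := fun n => l ^ n.
(* c_lambda: Phi x_lambda = c_lambda x_lambda, so c_lambda = (Phi x_lambda)_0 *)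
Definition coef (Phi : seqZ -> seqZ) (l : C) : C := Phi (xseq l) 0.
Definition spec (Phi : seqZ -> seqZ) (l : C) : Prop :=
  `|l| = 1 /\ coef Phi l != 0.

Definition subgroupT (S : C -> Prop) : Prop :=
  [/\ forall z, S z -> `|z| = 1, S 1,
      forall a b, S a -> S b -> S (a * b) & forall a, S a -> S a^-1].
End Defs.

(* Main.v *)
Require Import Defs.
From HB Require Import structures.
From mathcomp Require Import all_boot all_order all_algebra.
From mathcomp Require Import complex reals.
From Stdlib Require Import FunctionalExtensionality.
From mathcomp Require Import ring lra.
Import Order.TTheory GRing.Theory Num.Theory.
Local Open Scope ring_scope.
Local Open Scope complex_scope.

Section S.
Variable R : realType.
Notation C := R[i].

Lemma unit_conj (z : C) : `|z| = 1 -> z^-1 = z^*.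
Proof. by move=> h; rewrite invc_norm h expr1n invr1 mul1r. Qed.

Lemma unit_nz (z : C) : `|z| = 1 -> z != 0.
Proof. by move=> h; apply/eqP=> z0; move: h; rewrite z0 normr0 => /eqP; rewrite eq_sym oner_eq0. Qed.

Lemma normz1 (z : C) (n : int) : `|z| = 1 -> `|z ^ n| = 1.
Proof.
move=> h; case: n => k.
  by rewrite /exprz normrX h expr1n.
by rewrite /exprz normfV normrX h expr1n invr1.
Qed.

Lemma bounded_x (l : C) : `|l| = 1 -> bounded (xseq l).
Proof. by move=> h; exists 1 => n; rewrite /xseq normz1. Qed.

Lemma boundedD {u v : seqZ R} : bounded u -> bounded v -> bounded (fun n => u n + v n).
Proof.
move=> [M hM] [N hN]; exists (M + N) => n.
by apply: le_trans (ler_normD _ _) _; apply: lerD.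
Qed.

Lemma boundedZ (a : C) {u : seqZ R} : bounded u -> bounded (fun n => a * u n).
Proof.
move=> [M hM]; exists (`|a| * M) => n.
by rewrite normrM; apply: ler_wpM2l.
Qed.

Lemma bounded0 : bounded (fun _ : int => (0 : C)).
Proof. by exists 0 => n; rewrite normr0. Qed.

Lemma toR (z : C) : `|z| = (complex.Re `|z|)%:C.
Proof. by rewrite RRe_real // normr_real. Qed.

Lemma key (a b c : C) : `|a| = 1 -> `|b| = 1 -> `|c| = 1 ->
  `|a + (b + (c + (-1) * (a * b^-1 * c)))| <= ((29 / 10 : R))%:C.
Proof.
move=> ha hb hc; have bn := @unit_nz b hb.
have -> : a + (b + (c + (-1) * (a * b^-1 * c))) = (a + b) + c * ((b - a) * b^-1).
  by field.
have hs : `|a + b| ^+ 2 + `|b - a| ^+ 2 = 4.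
  rewrite !sqr_normc rmorphD rmorphB /=.
  have ea : a * a^* = 1 by rewrite -sqr_normc ha expr1n.
  have eb : b * b^* = 1 by rewrite -sqr_normc hb expr1n.
  have -> : (a + b) * (a^* + b^*) + (b - a) * (b^* - a^*) = 2 * (a * a^* + b * b^*) by ring.
  by rewrite ea eb; ring.
apply: le_trans (ler_normD _ _) _.
rewrite normrM hc mul1r normrM normfV hb invr1 mulr1.
move: hs; rewrite (toR (a + b)) (toR (b - a)).
set x := complex.Re _; set y := complex.Re _.
have x0 : 0 <= x by rewrite -lecR /x -toR; exact: normr_ge0.
have y0 : 0 <= y by rewrite -lecR /y -toR; exact: normr_ge0.
have e1 : (x ^+ 2 + y ^+ 2)%:C = x%:C ^+ 2 + y%:C ^+ 2 :> C.
  by rewrite rmorphD /= !rmorphXn.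
have e2 : (x + y)%:C = x%:C + y%:C :> C by rewrite rmorphD.
have e3 : (4 : R)%:C = 4 :> C by rewrite rmorph_nat.
rewrite -e1 -e3 => /complexI hs.
rewrite -e2 lecR.
have h0 := sqr_ge0 (x - y).
have h1 : (x + y) ^+ 2 <= 8 by nra.
nra.
Qed.

Variable Phi : seqZ R -> seqZ R.
Hypothesis Hlin : linear_linf Phi.

Lemma Phi0 : Phi (fun _ => 0) = (fun _ => 0).
Proof.
have := Hlin 1 _ _ bounded0 bounded0.
have -> : (fun n : int => (1 : C) * 0 + 0) = (fun _ => 0).
  by apply: functional_extensionality => n; rewrite mulr0 addr0.
move=> E; apply: functional_extensionality => n.
have := congr1 (fun f => f n) E => /=; rewrite mul1r.
set x := Phi _ n => h; by apply: (@addrI _ x); rewrite addr0 -h.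
Qed.

Lemma PhiD {u v : seqZ R} : bounded u -> bounded v ->
  Phi (fun n => u n + v n) = (fun n => Phi u n + Phi v n).
Proof.
move=> bu bv; have := Hlin 1 _ _ bu bv.
have -> : (fun n => (1 : C) * u n + v n) = (fun n => u n + v n).
  by apply: functional_extensionality => n; rewrite mul1r.
move=> ->; apply: functional_extensionality => n; by rewrite mul1r.
Qed.

Lemma PhiZ (a : C) {u : seqZ R} : bounded u ->
  Phi (fun n => a * u n) = (fun n => a * Phi u n).
Proof.
move=> bu; have := Hlin a _ _ bu bounded0.
have -> : (fun n => a * u n + 0) = (fun n => a * u n).
  by apply: functional_extensionality => n; rewrite addr0.
move=> ->; rewrite Phi0; apply: functional_extensionality => n; by rewrite addr0.
Qed.

Hypothesis Hsh : commutes_shift Phi.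

Lemma eigen {l : C} : `|l| = 1 ->
  Phi (xseq l) = (fun n => coef Phi l * xseq l n).
Proof.
move=> hl; have bx := @bounded_x l hl.
have lu : l \is a GRing.unit by rewrite unitfE (@unit_nz l).
set u := Phi (xseq l).
have step : forall n, u (n + 1) = l * u n.
  move=> n; have := Hsh _ bx.
  have -> : bshift (xseq l) = (fun m => l * xseq l m).
    apply: functional_extensionality => m.
    by rewrite /bshift /xseq exprzDr // expr1z mulrC.
  rewrite PhiZ // => /(congr1 (fun f => f n)) /= h.
  by rewrite /u h.
have stepk : forall (k : nat) n, u (n + k%:Z) = l ^+ k * u n.
  elim=> [|k IH] n; first by rewrite addr0 expr0 mul1r.
  rewrite -addn1 PoszD addrA step IH addn1 exprSr.
  by rewrite mulrA (mulrC l).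
suff E : forall n, u n = coef Phi l * xseq l n.
  exact: (functional_extensionality _ _ E).
move=> n; rewrite /coef -/u /xseq.
case: n => k.
  by rewrite -[Posz k]add0r stepk add0r /exprz mulrC.
have := stepk k.+1 (Negz k).
have -> : Negz k + k.+1%:Z = 0.
  by rewrite NegzE addrC subrr.
move=> ->; rewrite /exprz mulrC mulrA mulVf ?mul1r //.
by rewrite expf_neq0 // (@unit_nz l).
Qed.


Hypothesis Hid : idempotent_linf Phi.

Lemma coef1 {l : C} : `|l| = 1 -> coef Phi l != 0 -> coef Phi l = 1.
Proof.
move=> hl nz; have bx := @bounded_x l hl.
have h := congr1 (fun f => f 0) (Hid _ bx); move: h => /=.
rewrite {1}(eigen hl) PhiZ // -/(coef Phi l) => h.
by apply: (mulfI nz); rewrite mulr1.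
Qed.

Lemma part1 (l1 l2 l3 : C) :
  contractive_linf Phi ->
  spec Phi l1 -> spec Phi l2 -> spec Phi l3 -> spec Phi (l1 * l2^* * l3).
Proof.
move=> Hc [h1 n1] [h2 n2] [h3 n3].
set mu := l1 * l2^* * l3.
have hm : `|mu| = 1 by rewrite /mu !normrM normcJ h1 h2 h3 !mul1r.
split => //; apply/eqP => cm0.
have c1 := coef1 h1 n1; have c2 := coef1 h2 n2; have c3 := coef1 h3 n3.
have b1 := @bounded_x l1 h1; have b2 := @bounded_x l2 h2.
have b3 := @bounded_x l3 h3; have bm := @bounded_x mu hm.
have bm' := boundedZ (-1) bm.
have b3' := boundedD b3 bm'.
have b2' := boundedD b2 b3'.
have bg := boundedD b1 b2'.
have hg : forall n, `|xseq l1 n + (xseq l2 n + (xseq l3 n + (-1) * xseq mu n))|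
    <= ((29 / 10 : R))%:C.
  move=> n; rewrite /xseq.
  have -> : mu ^ n = l1 ^ n * (l2 ^ n)^-1 * l3 ^ n.
    rewrite /mu !expfzMl; congr (_ * _ * _).
    by rewrite expfV (@unit_conj l2 h2).
  by apply: key; apply: normz1.
have := Hc _ _ bg hg 0.
rewrite (PhiD b1 b2') (PhiD b2 b3') (PhiD b3 bm') (PhiZ _ bm).
rewrite (eigen h1) (eigen h2) (eigen h3) (eigen hm) /= /xseq !expr0z.
rewrite c1 c2 c3 cm0 mul0r mulr0 !mulr1 addr0.
have -> : (1 + (1 + 1) : C) = 3%:R by [].
rewrite normr_nat -(rmorph_nat (real_complex R)) lecR.
move=> h; have h' : (29 / 10 : R) < 3%:R by lra.
by move: h; rewrite leNgt h'.
Qed.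

End S.


Theorem theorem2p9 (R : realType) (Phi : seqZ R -> seqZ R) :
  maps_linf Phi -> linear_linf Phi -> contractive_linf Phi ->
  idempotent_linf Phi -> commutes_shift Phi ->
  [/\ (forall l1 l2 l3 : R[i], spec Phi l1 -> spec Phi l2 -> spec Phi l3 ->
         spec Phi (l1 * l2^* * l3)),
      (forall l : R[i], spec Phi l ->
         subgroupT (fun z : R[i] => exists2 mu, spec Phi mu & z = l^* * mu))
    & (unital Phi -> subgroupT (spec Phi))].
Proof.
move=> _ Hlin Hc Hid Hsh.
have P1 : forall l1 l2 l3 : R[i], spec Phi l1 -> spec Phi l2 -> spec Phi l3 ->
         spec Phi (l1 * l2^* * l3).
  by move=> l1 l2 l3; apply: part1.
split => //.
- move=> l hl; have [nl _] := hl.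
  have ll : l^* * l = 1 by rewrite mulrC -sqr_normc nl expr1n.
  split.
  + by move=> z [mu [hmu _] ->]; rewrite normrM normcJ nl hmu mulr1.
  + by exists l.
  + move=> a b [m1 hm1 ->] [m2 hm2 ->]; exists (m1 * l^* * m2); first exact: P1.
    by rewrite !mulrA.
  + move=> a [m hm ->]; exists (l * m^* * l); first exact: P1.
    have [nm _] := hm.
    have nlc : `|l^*| = 1 by rewrite normcJ.
    rewrite invfM (@unit_conj R m nm) (@unit_conj R (l^*) nlc) conjcK.
    by rewrite !mulrA ll mul1r mulrC.
- move=> hu.
  have s1 : spec Phi 1.
    split; first by rewrite normr1.
    rewrite /coef.
    have -> : xseq (1 : R[i]) = (fun _ => 1).
      by apply: functional_extensionality => n; rewrite /xseq exp1rz.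
    by rewrite hu oner_neq0.
  split.
  + by move=> z [].
  + exact: s1.
  + move=> a b ha hb; have := P1 _ _ _ ha s1 hb.
    by rewrite conjC1 mulr1.
  + move=> a ha; have := P1 _ _ _ s1 ha s1.
    have [na _] := ha.
    by rewrite mulr1 mul1r (@unit_conj R a na).
Qed.
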